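(* Let $k\ge 1$, $b\ge 0$ and $s$ be integers with $1\le s<k$. Then for every integer $t$, $$\sigma_{k}^{(b)}(t;s+1)=\sigma_{k}^{(b)}(t;s)-\sigma_{k}^{(b)}(t-s;s).$$
   Context: For a positive integer $m$, $(q)_m=(1-q)\cdots(1-q^m)$, $(q)_0=1$. For integers $b\ge 0$, $k\ge1$ and $1\le s\le k$, let $R^{(b)}_{k,s}(q)=\sum_{t=0}^{k-1}\sigma^{(b)}_k(t;s)q^t$ be the remainder of $\frac{1}{k^b}(q)_{k-1}^{\,b}(q)_{s-1}$ upon division by $1-q^k$. The values $\sigma^{(b)}_k(t;s)$ are extended to all integers $t$ by $k$-periodicity in $t$. *)

(* Defs.v *)
From HB Require Import structures.
From mathcomp Require Import all_boot all_order all_algebra.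
Set Implicit Arguments. Unset Strict Implicit. Unset Printing Implicit Defensive.
Import Order.TTheory GRing.Theory Num.Theory.
Local Open Scope ring_scope.

Definition qpoch (m : nat) : {poly rat} := \prod_(1 <= i < m.+1) (1 - 'X^i).

Definition Rrem (b k s : nat) : {poly rat} :=
  ((k%:R : rat)^-1 ^+ b *: (qpoch k.-1 ^+ b * qpoch s.-1)) %% (1 - 'X^k).

(* sigma^{(b)}_k(t;s), extended k-periodically to integers t. *)
Definition sigma (b k s : nat) (t : int) : rat :=
  (Rrem b k s)`_(absz (t %% (k%:Z))%Z).

(* Main.v *)
Require Import Defs.
From mathcomp Require Import all_boot all_order all_algebra.
From mathcomp Require Import zify ring.
Import Order.TTheory GRing.Theory Num.Theory.
Local Open Scope ring_scope.

Lemma size_m (k : nat) : (0 < k)%N -> size (1 - 'X^k : {poly rat}) = k.+1.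
Proof.
move=> k0; rewrite -opprB size_polyN -polyC1 size_XnsubC //.
Qed.

Lemma shift_mod (k s j : nat) (r : {poly rat}) :
  (0 < k)%N -> (s < k)%N -> (size r <= k)%N -> (j < k)%N ->
  (('X^s * r) %% (1 - 'X^k))`_j = r`_(if (s <= j)%N then (j - s)%N else (j + k - s)%N).
Proof.
move=> k0 sk szr jk.
set A : {poly rat} := \poly_(i < k) (if (s <= i)%N then r`_(i-s) else 0).
set B : {poly rat} := \poly_(i < k) (if (i < s)%N then r`_(i+k-s) else 0).
have rz : forall n, (k <= n)%N -> r`_n = 0.
  by move=> n kn; apply: nth_default; apply: leq_trans kn.
have E : 'X^s * r = A + 'X^k * B.
  apply/polyP => i; rewrite coefD !coefXnM !coef_poly.
  case: (ltnP i s) => iS.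
    have ik : (i < k)%N by lia.
    by rewrite ik addr0.
  case: (ltnP i k) => ik.
    by rewrite addr0.
  rewrite add0r.
  case: (ltnP (i - k) s) => iks.
    have -> : (i - k < k)%N = true by lia.
    by congr (r`_ _); lia.
  by rewrite rz; [case: ifP | lia].
have E2 : 'X^s * r = (- B) * (1 - 'X^k) + (A + B).
  by rewrite E; ring.
rewrite E2 modp_addl_mul_small; last first.
  rewrite size_m //; apply: leq_ltn_trans (size_polyD _ _) _.
  by rewrite gtn_max !ltnS !size_poly.
rewrite coefD !coef_poly jk.
case: (leqP s j) => sj; first by rewrite addr0.
by rewrite add0r.
Qed.

Lemma Rrem_step (b k s : nat) : (0 < k)%N -> (1 <= s)%N ->
  Rrem b k s.+1 = Rrem b k s - ('X^s * Rrem b k s) %% (1 - 'X^k).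
Proof.
move=> k0 s1; rewrite /Rrem modp_mul -modpN -modpD.
congr (_ %% _).
case: s s1 => [|s'] // _ /=.
have Hq : qpoch s'.+1 = qpoch s' * (1 - 'X^(s'.+1)) by rewrite /qpoch big_nat_recr.
rewrite Hq; set Q := qpoch k.-1 ^+ b; set c := (k%:R : rat)^-1 ^+ b.
rewrite -!mul_polyC; ring.
Qed.

Theorem theorem2p2 (k b s : nat) :
  (1 <= k)%N -> (1 <= s)%N -> (s < k)%N ->
  forall t : int, sigma b k s.+1 t = sigma b k s t - sigma b k s (t - s%:Z).
Proof.
move=> k1 s1 sk t.
rewrite /sigma Rrem_step // coefB.
set j := absz (t %% k)%Z.
have jE : (t %% k)%Z = j%:Z by rewrite /j abszE ger0_norm // modz_ge0 //; lia.
have jk : (j < k)%N.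
  have : 0 < k%:Z by lia.
  move=> /(ltz_pmod t); rewrite jE; lia.
rewrite shift_mod //; last first.
  by rewrite /Rrem -ltnS -(@size_m k k1) ltn_modp -size_poly_eq0 size_m.
congr (_ - (Rrem b k s)`_ _).
have -> : ((t - s%:Z) %% k%:Z)%Z = ((j%:Z - s%:Z) %% k%:Z)%Z.
  by rewrite -jE modzDml.
case: (leqP s j) => sj.
  rewrite modz_small; lia.
rewrite -(modzDr (j%:Z - s%:Z)) modz_small; lia.
Qed.
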